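(* In the setting of the context, assume $q<q_c$ and let $\beta\in(0,1)$. For the estimate $\hat q$ (when $\hat q<q_c$), let $\bar q$ be the optimal value of the problem $$\max_{x\in[0,1]} x\quad\text{s.t.}\quad x\ge\hat q,\quad Q+(1-x)\hat K^\top R\hat K-(x-\hat q)A^\top\hat PB(R+B^\top\hat PB)^{-1}B^\top\hat PA\succ0 .$$ Then with probability at least $1-\beta$ (over the samples) the following holds: if $\hat q<q_c$ and $\bar q\ge\hat q+\Delta(N_q,\beta)$, where $\Delta(N_q,\beta)=\sqrt{\log(2/\beta)/(2N_q)}$, then $\hat K$ mean-square stabilizes the system.
   Context: Let $A\in\mathbb{R}^{n\times n}$, $B\in\mathbb{R}^{n\times m}$ with $(A,B)$ stabilizable, and let $Q$, $R$ be symmetric positive definite. Consider $x_{t+1}=Ax_t+\lambda_tBu_t$, $t\ge0$, with $x_0$ random with finite mean and covariance and $\{\lambda_t\}$ i.i.d. Bernoulli, independent of $x_0$, with $\mathcal{P}(\lambda_t=0)=q$, $q\in(0,1)$ unknown. The estimate is $\hat q=\frac1{N_q}\sum_{i=1}^{N_q}(1-\lambda_i)$ from $N_q$ i.i.d. samples with the same Bernoulli law. For $p\in[0,1)$ the modified Riccati equation with parameter $p$ is $X=Q+A^\top XA-(1-p)A^\top XB(R+B^\top XB)^{-1}B^\top XA$; $q_c$ is the critical loss probability such that for every $p\in[0,q_c)$ this equation has a unique positive definite solution. For $\hat q\in[0,q_c)$, $\hat P$ is the positive definite solution for parameter $\hat q$ and $\hat K=-(R+B^\top\hat PB)^{-1}B^\top\hat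 PA$. $\hat K$ mean-square stabilizes the system if the closed loop $x_{t+1}=(A+\lambda_tB\hat K)x_t$ satisfies $\lim_{t\to\infty}\mathbb{E}\{x_t^\top x_t\}=0$. *)

(* Defs.v *)
From HB Require Import structures.
From mathcomp Require Import all_boot all_order all_algebra.
From mathcomp Require Import all_classical all_reals all_analysis.
Set Implicit Arguments. Unset Strict Implicit. Unset Printing Implicit Defensive.
Import Order.TTheory GRing.Theory Num.Theory.
Import numFieldNormedType.Exports.
Local Open Scope classical_set_scope.
Local Open Scope ring_scope.

Section Defs.
Variable R : realType.

Definition posdef (n : nat) (M : 'M[R]_n) : Prop :=
  M^T = M /\ forall x : 'cV[R]_n, x != 0 -> 0 < (x^T *m M *m x) 0 0.

Fixpoint det_state (n : nat) (F : 'M[R]_n) (x0 : 'cV[R]_n) (t : nat) : 'cV[R]_n :=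
  match t with 0 => x0 | t'.+1 => F *m det_state F x0 t' end.

Definition stabilizable (n m : nat) (A : 'M[R]_n) (B : 'M[R]_(n, m)) : Prop :=
  exists K : 'M[R]_(m, n), forall (x0 : 'cV[R]_n) (i : 'I_n),
    (fun t => det_state (A + B *m K) x0 t i 0) @ \oo --> (0 : R).

Definition riccati (n m : nat) (A : 'M[R]_n) (B : 'M[R]_(n, m))
  (Q : 'M[R]_n) (Rw : 'M[R]_m) (p : R) (X : 'M[R]_n) : Prop :=
  X = Q + A^T *m X *m A
      - (1 - p) *: (A^T *m X *m B *m invmx (Rw + B^T *m X *m B) *m B^T *m X *m A).

Definition gain (n m : nat) (A : 'M[R]_n) (B : 'M[R]_(n, m)) (Rw : 'M[R]_m)
  (P : 'M[R]_n) : 'M[R]_(m, n) :=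
  - (invmx (Rw + B^T *m P *m B) *m B^T *m P *m A).

(* closed-loop state x_t = (A+λ_{t-1}BK)...(A+λ_0BK) x_0 along a
   packet-arrival sequence lam (lam t = true iff λ_t = 1) *)
Fixpoint cl_state (n m : nat) (A : 'M[R]_n) (B : 'M[R]_(n, m)) (K : 'M[R]_(m, n))
  (lam : nat -> bool) (x0 : 'cV[R]_n) (t : nat) : 'cV[R]_n :=
  match t with
  | 0 => x0
  | t'.+1 => (A + (lam t')%:R *: (B *m K)) *m cl_state A B K lam x0 t'
  end.

Definition bern_prob (q : R) (k : nat) (s : {ffun 'I_k -> bool}) : R :=
  \prod_(i < k) (if s i then 1 - q else q).

Definition ext_path (k : nat) (s : {ffun 'I_k -> bool}) : nat -> bool :=
  fun i => match insub i with Some j => s j | None => false end.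

(* E{x_t^T x_t} when x_0 ~ P (on a probability space) and λ_0..λ_{t-1}
   i.i.d. Bernoulli independent of x_0: expectation over the product
   space, written as a finite sum over the λ-paths of the x_0-expectation. *)
Definition ms_energy (n m : nat) (A : 'M[R]_n) (B : 'M[R]_(n, m)) (K : 'M[R]_(m, n))
  (q : R) (d : measure_display) (T : measurableType d) (P : probability T R)
  (x0 : T -> 'cV[R]_n) (t : nat) : R :=
  \sum_(s : {ffun 'I_t -> bool})
    bern_prob q s *
    fine (\int[P]_w (((cl_state A B K (ext_path s) (x0 w) t)^T
                        *m cl_state A B K (ext_path s) (x0 w) t) 0 0)%:E).

(* K mean-square stabilizes x_{t+1} = (A + λ_t B K) x_t, P(λ_t = 0) = q:
   for every random initial state with finite mean and covariance
   (measurable with square-integrable entries), E{x_t^T x_t} -> 0. *)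
Definition ms_stabilizes (n m : nat) (A : 'M[R]_n) (B : 'M[R]_(n, m))
  (K : 'M[R]_(m, n)) (q : R) : Prop :=
  forall (d : measure_display) (T : measurableType d) (P : probability T R)
    (x0 : T -> 'cV[R]_n),
    (forall i : 'I_n, measurable_fun setT (fun w => x0 w i 0)) ->
    (forall i : 'I_n, P.-integrable setT (fun w => ((x0 w i 0) ^+ 2)%:E)) ->
    (fun t => ms_energy A B K q P x0 t) @ \oo --> (0 : R).

Definition qhat (N : nat) (s : {ffun 'I_N -> bool}) : R :=
  (\sum_(i < N) (~~ s i)%:R) / N%:R.

Definition sample_prob (q : R) (N : nat) (E : {ffun 'I_N -> bool} -> Prop) : R :=
  \sum_(s : {ffun 'I_N -> bool} | `[< E s >]) bern_prob q s.

Definition Delta (N : nat) (beta : R) : R :=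
  Num.sqrt (ln (2 / beta) / (2 * N%:R)).

Definition qbar (n m : nat) (A : 'M[R]_n) (B : 'M[R]_(n, m))
  (Q : 'M[R]_n) (Rw : 'M[R]_m) (qh : R) (Ph : 'M[R]_n) : R :=
  let Kh := gain A B Rw Ph in
  sup [set x : R | 0 <= x <= 1 /\ qh <= x /\
        posdef (Q + (1 - x) *: (Kh^T *m Rw *m Kh)
                  - (x - qh) *: (A^T *m Ph *m B *m invmx (Rw + B^T *m Ph *m B)
                                  *m B^T *m Ph *m A))].

End Defs.

(* Main.v *)
Require Import Defs.
From HB Require Import structures.
From mathcomp Require Import all_boot all_order all_algebra.
From mathcomp Require Import all_classical all_reals all_analysis.
From mathcomp Require Import measurable_realfun.
From mathcomp Require Import ring lra.
Import Order.TTheory GRing.Theory Num.Theory.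
Import numFieldNormedType.Exports.
Set Implicit Arguments. Unset Strict Implicit. Unset Printing Implicit Defensive.
Local Open Scope ring_scope.
Section PA.
Variable R : realType.

Definition bil n (M : 'M[R]_n) (x y : 'cV[R]_n) : R := (x^T *m M *m y) 0 0.
Definition qf n (M : 'M[R]_n) (x : 'cV[R]_n) : R := bil M x x.

Lemma bilE n (M : 'M[R]_n) x y : bil M x y = \sum_j (\sum_i x i 0 * M i j) * y j 0.
Proof. rewrite /bil mxE; apply: eq_bigr => j _; rewrite !mxE; congr (_ * _).
by apply: eq_bigr => i _; rewrite !mxE. Qed.

Lemma bil_sym n (M : 'M[R]_n) x y : bil M x y = bil M^T y x.
Proof. rewrite /bil (_ : (x^T *m M *m y) 0 0 = (x^T *m M *m y)^T 0 0); last by rewrite [RHS]mxE.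
by rewrite !trmx_mul trmxK mulmxA. Qed.

Lemma bilDl n (M : 'M[R]_n) x1 x2 y : bil M (x1 + x2) y = bil M x1 y + bil M x2 y.
Proof. by rewrite /bil linearD /= !mulmxDl mxE. Qed.
Lemma bilDr n (M : 'M[R]_n) x y1 y2 : bil M x (y1 + y2) = bil M x y1 + bil M x y2.
Proof. by rewrite /bil !mulmxDr mxE. Qed.
Lemma bilZl n (M : 'M[R]_n) a x y : bil M (a *: x) y = a * bil M x y.
Proof. by rewrite /bil linearZ /= -!scalemxAl mxE. Qed.
Lemma bilZr n (M : 'M[R]_n) a x y : bil M x (a *: y) = a * bil M x y.
Proof. by rewrite /bil -!scalemxAr mxE. Qed.
Lemma bilMD n (M N : 'M[R]_n) x y : bil (M + N) x y = bil M x y + bil N x y.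
Proof. by rewrite /bil mulmxDr mulmxDl mxE. Qed.
Lemma bilMZ n (M : 'M[R]_n) a x y : bil (a *: M) x y = a * bil M x y.
Proof. by rewrite /bil -scalemxAr -scalemxAl mxE. Qed.
Lemma bilMN n (M : 'M[R]_n) x y : bil (- M) x y = - bil M x y.
Proof. by rewrite -scaleN1r bilMZ mulN1r. Qed.
Lemma bil_mul n k (F : 'M[R]_(n,k)) (M : 'M[R]_n) x y :
  bil (F^T *m M *m F) x y = bil M (F *m x) (F *m y).
Proof. by rewrite /bil trmx_mul !mulmxA. Qed.
Lemma bil0l n (M : 'M[R]_n) y : bil M 0 y = 0.
Proof. by rewrite /bil trmx0 !mul0mx mxE. Qed.

Lemma qf_sym n (M : 'M[R]_n) x : qf M^T x = qf M x.
Proof. by rewrite /qf bil_sym trmxK. Qed.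

Lemma qf1E n (x : 'cV[R]_n) : qf 1%:M x = \sum_i x i 0 ^+ 2.
Proof. rewrite /qf bilE; apply: eq_bigr => j _.
rewrite (bigD1 j) //= big1 ?addr0 ?mxE ?eqxx ?mulr1 ?expr2 //.
by move=> i /negbTE nij; rewrite mxE ?nij ?(eq_sym j i) ?nij ?mulr0 ?mul0r. Qed.

Lemma qf1_ge0 n (x : 'cV[R]_n) : 0 <= qf 1%:M x.
Proof. by rewrite qf1E sumr_ge0 // => i _; rewrite sqr_ge0. Qed.

Lemma qf1_gt0 n (x : 'cV[R]_n) : x != 0 -> 0 < qf 1%:M x.
Proof.
move=> nx; have [i xi] : exists i, x i 0 != 0.
  apply/existsP; apply: contraNT nx; rewrite negb_exists => /forallP H.
  by apply/eqP/matrixP => i j; rewrite (ord1 j) mxE; move: (H i); rewrite negbK => /eqP.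
rewrite qf1E (bigD1 i) //=; apply: (lt_le_trans (y := x i 0 ^+ 2)).
  by rewrite lt_def sqrf_eq0 xi sqr_ge0.
by rewrite lerDl sumr_ge0 // => k _; rewrite sqr_ge0.
Qed.

Lemma posdef_ge0 n (M : 'M[R]_n) x : posdef M -> 0 <= qf M x.
Proof. move=> [_ H]; have [->|nx] := eqVneq x 0; first by rewrite /qf bil0l.
by apply/ltW; apply: H. Qed.

Lemma posdef_unit n (M : 'M[R]_n) : posdef M -> M \in unitmx.
Proof.
move=> [_ H]; rewrite unitmxE unitfE; apply/negP => /det0P [v nv vM].
have : v^T != 0 by apply: contra nv => /eqP h; rewrite -[v]trmxK h trmx0.
move/H; by rewrite trmxK vM mul0mx mxE ltxx.
Qed.

Lemma qf_ub n (N : 'M[R]_n) : exists d, 0 <= d /\ forall x, qf N x <= d * qf 1%:M x.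
Proof.
exists (\sum_j \sum_i `|N i j|); split.
  by rewrite sumr_ge0 // => j _; rewrite sumr_ge0.
move=> x; rewrite /qf bilE mulr_suml; apply: ler_sum => j _.
rewrite mulr_suml mulr_suml; apply: ler_sum => i _.
have h1 : x i 0 ^+ 2 <= qf 1%:M x.
  by rewrite qf1E (bigD1 i) //= lerDl sumr_ge0 // => k _; rewrite sqr_ge0.
have h2 : x j 0 ^+ 2 <= qf 1%:M x.
  by rewrite qf1E (bigD1 j) //= lerDl sumr_ge0 // => k _; rewrite sqr_ge0.
set a := x i 0 in h1 *; set b := x j 0 in h2 *; set c := N i j.
have : c * (a * b) <= `|c| * qf 1%:M x.
  apply: (le_trans (ler_norm _)); rewrite normrM ler_wpM2l //.
  rewrite normrM; have := sqr_ge0 (`|a| - `|b|).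
  rewrite sqrrB !real_normK ?num_real // mulr2n.
  move: h1 h2; set u := `|a| * `|b|; set S := qf 1%:M x; move: (a ^+ 2) (b ^+ 2) => A B.
  lra.
by rewrite mulrAC [_ * c]mulrC.
Qed.

Lemma posdef_lb n (M : 'M[R]_n) : posdef M ->
  exists c, 0 < c /\ forall x, qf 1%:M x <= c * qf M x.
Proof.
move=> pM; have Mu := posdef_unit pM; have [Ms _] := pM.
have [d [d0 Hd]] := qf_ub (invmx M).
exists (d + 1); split; first by rewrite ltr_wpDl.
move=> x; have [->|nx] := eqVneq x 0.
  by rewrite /qf !bil0l mulr0.
set a := qf M x; set b := qf 1%:M x; set cc := qf (invmx M) x.
have b0 : 0 < b by apply: qf1_gt0.
have a0 : 0 < a by case: pM => _ H; apply: H.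
have hc : cc <= d * b by apply: Hd.
set v := invmx M *m x.
have e1 : bil M x v = b by rewrite /bil /b /qf /bil mulmxA -(mulmxA _ M) mulmxV // mulmx1.
have e2 : bil M v x = b by rewrite bil_sym Ms.
have e3 : qf M v = cc.
  rewrite /qf /cc /qf /bil /v -(mulmxA _ M) (mulmxA M) mulmxV // mul1mx trmx_mul.
  by rewrite trmx_inv Ms.
have key : forall t, 0 <= a - t * b - t * b + t ^+ 2 * cc.
  move=> t; have := posdef_ge0 (x + (- t) *: v) pM.
  rewrite /qf bilDl !bilDr !bilZl !bilZr -/(qf M x) -/a e1 e2 -/(qf M v) e3.
  move=> h; apply: (le_trans h); rewrite le_eqVlt; apply/orP; left; apply/eqP; ring.
have := key (a / b); rewrite divfK ?gt_eqF //.
move=> h.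
have h' : b ^+ 2 <= a * cc.
  have : 0 <= (a * cc - b ^+ 2) * (a / b ^+ 2).
    have -> : (a * cc - b ^+ 2) * (a / b ^+ 2) = a - a - a + (a / b) ^+ 2 * cc.
      by field; rewrite gt_eqF.
    done.
  rewrite pmulr_lge0 ?subr_ge0 // divr_gt0 // exprn_gt0 //.
have : b ^+ 2 <= a * (d * b) by apply: (le_trans h'); rewrite ler_wpM2l // ltW.
nra.
Qed.

End PA.
Section PB.
Variable R : realType.

Definition pcons (b : bool) (l : nat -> bool) : nat -> bool :=
  fun i => if i is j.+1 then l j else b.

Definition phiff t (p : bool * {ffun 'I_t -> bool}) : {ffun 'I_t.+1 -> bool} :=
  [ffun i => if unlift ord0 i is Some j then p.2 j else p.1].
Definition psiff t (s : {ffun 'I_t.+1 -> bool}) : bool * {ffun 'I_t -> bool} :=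
  (s ord0, [ffun j => s (lift ord0 j)]).

Lemma phiffK t : cancel (@phiff t) (@psiff t).
Proof.
move=> [b s]; rewrite /psiff /phiff /= ffunE unlift_none; congr pair.
by apply/ffunP => j; rewrite !ffunE liftK.
Qed.
Lemma psiffK t : cancel (@psiff t) (@phiff t).
Proof.
move=> s; apply/ffunP => i; rewrite /psiff /phiff /= ffunE.
case: unliftP => [j ->|->] /=; by rewrite ?ffunE.
Qed.

Lemma ext_path_phi t b (s : {ffun 'I_t -> bool}) :
  ext_path (phiff (b, s)) = pcons b (ext_path s).
Proof.
apply: funext => i; rewrite /ext_path /pcons; case: i => [|k].
  case: insubP => [j _ vj|nP]; last by [].
  have -> : j = ord0 by apply: val_inj.
  by rewrite ffunE unlift_none.
case: insubP => [j _ vj|nP]; case: insubP => [j' _ vj'|nP'] //=.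
- have -> : j = lift ord0 j' by apply: val_inj; rewrite /= vj vj'.
  by rewrite ffunE liftK.
- by move: nP'; rewrite -ltnS -vj ltn_ord.
- by move: nP; rewrite ltnS -vj' ltn_ord.
Qed.

Lemma bern_prob_phi (q : R) t b (s : {ffun 'I_t -> bool}) :
  bern_prob q (phiff (b, s)) = (if b then 1 - q else q) * bern_prob q s.
Proof.
rewrite /bern_prob big_ord_recl ffunE unlift_none; congr (_ * _).
by apply: eq_bigr => i _; rewrite ffunE liftK.
Qed.

Lemma path_sum_split (q : R) t (G : (nat -> bool) -> R) :
  \sum_(s : {ffun 'I_t.+1 -> bool}) bern_prob q s * G (ext_path s) =
  q * \sum_(s : {ffun 'I_t -> bool}) bern_prob q s * G (pcons false (ext_path s)) +
  (1 - q) * \sum_(s : {ffun 'I_t -> bool}) bern_prob q s * G (pcons true (ext_path s)).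
Proof.
rewrite (reindex (@phiff t)) /=; last first.
  by exists (@psiff t) => x _; [apply: phiffK | apply: psiffK].
rewrite -(pair_big xpredT xpredT (fun b s => bern_prob q (phiff (b, s)) * G (ext_path (phiff (b, s))))) /=.
rewrite big_bool /= addrC !mulr_sumr; congr (_ + _); apply: eq_bigr => s _;
  by rewrite bern_prob_phi ext_path_phi mulrA.
Qed.

Lemma bern_prob_ge0 (q : R) t (s : {ffun 'I_t -> bool}) : 0 <= q <= 1 -> 0 <= bern_prob q s.
Proof. move=> /andP [q0 q1]; rewrite /bern_prob prodr_ge0 // => i _.
by case: (s i) => //; rewrite subr_ge0. Qed.

Lemma bern_sum1 (q : R) t : \sum_(s : {ffun 'I_t -> bool}) bern_prob q s = 1.
Proof.
rewrite /bern_prob -(bigA_distr_bigA (fun (i : 'I_t) (b : bool) => if b then 1 - q else q)) /=.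
by rewrite big1 // => i _; rewrite big_bool /= subrK.
Qed.

Section Stab.
Variables (n m : nat) (A : 'M[R]_n) (B : 'M[R]_(n, m)) (K : 'M[R]_(m, n)).
Definition Fb (b : bool) : 'M[R]_n := A + (b%:R) *: (B *m K).

Lemma cl_shift lam (x : 'cV[R]_n) t :
  cl_state A B K lam x t.+1 = cl_state A B K (fun i => lam i.+1) (Fb (lam 0%N) *m x) t.
Proof. elim: t => [|t IH] //.
by rewrite -[cl_state _ _ _ _ _ t.+2]/(Fb (lam t.+1) *m cl_state A B K lam x t.+1) IH. Qed.

Definition Wsum (q : R) (f : 'cV[R]_n -> R) t (x : 'cV[R]_n) : R :=
  \sum_(s : {ffun 'I_t -> bool}) bern_prob q s * f (cl_state A B K (ext_path s) x t).

Lemma Wsum_rec q f t x :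
  Wsum q f t.+1 x = q * Wsum q f t (Fb false *m x) + (1 - q) * Wsum q f t (Fb true *m x).
Proof.
rewrite /Wsum (path_sum_split q t (fun l => f (cl_state A B K l x t.+1))).
by congr (_ * _ + _ * _); apply: eq_bigr => s _; rewrite cl_shift.
Qed.

Lemma Wsum0 q f x : Wsum q f 0 x = f x.
Proof.
rewrite /Wsum /= (eq_bigr (fun _ => f x)); last by move=> s _; rewrite /bern_prob big_ord0 mul1r.
by rewrite sumr_const card_ffun card_ord expn0 mulr1n.
Qed.

Lemma Wsum_bound q f rho :
  0 <= q <= 1 -> 0 <= rho -> (forall x, 0 <= f x) ->
  (forall x, q * f (Fb false *m x) + (1 - q) * f (Fb true *m x) <= rho * f x) ->
  forall t x, Wsum q f t x <= rho ^+ t * f x.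
Proof.
move=> /andP [q0 q1] r0 f0 Hf; elim=> [|t IH] x; first by rewrite Wsum0 expr0 mul1r.
rewrite Wsum_rec; apply: (le_trans (y := q * (rho ^+ t * f (Fb false *m x)) +
   (1 - q) * (rho ^+ t * f (Fb true *m x)))).
  by apply: lerD; apply: ler_wpM2l; rewrite ?subr_ge0 ?IH.
rewrite mulrCA [(1 - q) * _]mulrCA -mulrDr exprSr -mulrA.
by apply: ler_wpM2l; rewrite ?exprn_ge0.
Qed.

Lemma Wsum_le q f g c t x : 0 <= q <= 1 -> (forall y, f y <= c * g y) ->
  Wsum q f t x <= c * Wsum q g t x.
Proof.
move=> hq H; rewrite /Wsum mulr_sumr; apply: ler_sum => s _.
by rewrite mulrCA; apply: ler_wpM2l; [apply: bern_prob_ge0|apply: H].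
Qed.

End Stab.
End PB.
Section PC.
Variable R : realType.
Variables (n m : nat) (A : 'M[R]_n) (B : 'M[R]_(n, m)) (Q : 'M[R]_n) (Rw : 'M[R]_m)
  (P : 'M[R]_n) (qh : R).
Hypotheses (pRw : posdef Rw) (pP : posdef P) (ric : riccati A B Q Rw qh P).

Let W := Rw + B^T *m P *m B.
Let Wi := invmx W.
Let F := B^T *m P *m A.
Let G := A^T *m P *m B *m invmx (Rw + B^T *m P *m B) *m B^T *m P *m A.
Let K := gain A B Rw P.

Lemma bilNl k (M : 'M[R]_k) x y : bil M (- x) y = - bil M x y.
Proof. by rewrite -scaleN1r bilZl mulN1r. Qed.
Lemma bilNr k (M : 'M[R]_k) x y : bil M x (- y) = - bil M x y.
Proof. by rewrite -scaleN1r bilZr mulN1r. Qed.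
Lemma bil_mulr k (M N : 'M[R]_k) a b : bil M a (N *m b) = bil (M *m N) a b.
Proof. by rewrite /bil !mulmxA. Qed.
Lemma bil1M k (M : 'M[R]_k) a b : bil 1%:M (M *m a) b = bil M^T a b.
Proof. by rewrite /bil trmx_mul mulmx1. Qed.
Lemma bil_Bl k l (M : 'M[R]_k) (C : 'M[R]_(k,l)) u v : bil M (C *m u) v = bil 1%:M u (C^T *m M *m v).
Proof. by rewrite /bil trmx_mul mulmx1 !mulmxA. Qed.

Lemma Ps : P^T = P. Proof. by case: pP. Qed.
Lemma W_posdef : posdef W.
Proof.
have [Rs HR] := pRw; split.
  by rewrite /W linearD /= Rs !trmx_mul trmxK Ps mulmxA.
move=> u nu; rewrite -/(bil W u u) bilMD bil_mul.
by rewrite ltr_wpDr ?HR //; apply: posdef_ge0.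
Qed.
Lemma W_unit : W \in unitmx. Proof. exact: posdef_unit W_posdef. Qed.
Lemma Wi_sym : Wi^T = Wi.
Proof. by rewrite /Wi trmx_inv; case: W_posdef => ->. Qed.

Lemma G_eq : G = F^T *m Wi *m F.
Proof. by rewrite /G /F /Wi -/W !trmx_mul trmxK Ps !mulmxA. Qed.
Lemma K_eq : K = - (Wi *m F).
Proof. by rewrite /K /gain /F /Wi -/W !mulmxA. Qed.

Lemma g_eq x : qf G x = qf W (K *m x).
Proof.
rewrite /qf G_eq bil_mul K_eq mulNmx bilNl bilNr opprK -!(mulmxA Wi).
by rewrite bil_mulr mulmxV ?W_unit // bil1M Wi_sym.
Qed.

Lemma one_step (q : R) x :
  q * qf P (Fb A B K false *m x) + (1 - q) * qf P (Fb A B K true *m x) =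
  qf P x - (qf Q x + (1 - q) * qf Rw (K *m x) + (qh - q) * qf G x).
Proof.
have e0 : Fb A B K false = A by rewrite /Fb scale0r addr0.
have e1 : Fb A B K true = A + B *m K by rewrite /Fb scale1r.
rewrite e0 e1 g_eq.
set u := K *m x.
have hP : qf P x = qf Q x + qf P (A *m x) - (1 - qh) * qf W u.
  by rewrite -g_eq {1}ric /qf !bilMD bilMN bilMZ bil_mul /G.
have hW : qf W u = qf Rw u + qf P (B *m u) by rewrite /qf bilMD bil_mul.
have hx : bil P (A *m x) (B *m u) = - qf W u.
  rewrite bil_sym Ps bil_Bl /qf {3}/u K_eq mulNmx bilNr opprK -(mulmxA Wi) bil_mulr.
  by rewrite mulmxV ?W_unit // /F !mulmxA.
have hy : bil P (B *m u) (A *m x) = - qf W u by rewrite bil_sym Ps.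
have -> : qf P ((A + B *m K) *m x) = qf P (A *m x) + bil P (A *m x) (B *m u)
     + bil P (B *m u) (A *m x) + qf P (B *m u).
  by rewrite /qf mulmxDl -mulmxA -/u !bilDl !bilDr !addrA.
rewrite hx hy hP; move: (qf W u) hW => w ->; ring.
Qed.

End PC.
Section PD.
Variable R : realType.
Variables (n m : nat) (A : 'M[R]_n) (B : 'M[R]_(n, m)) (K : 'M[R]_(m, n)).

Fixpoint clmat (lam : nat -> bool) t : 'M[R]_n :=
  match t with 0 => 1%:M | t'.+1 => Fb A B K (lam t') *m clmat lam t' end.

Lemma cl_stateE lam x t : cl_state A B K lam x t = clmat lam t *m x.
Proof. elim: t => [|t IH] /=; first by rewrite mul1mx.
by rewrite IH mulmxA. Qed.

Lemma meas_qf d (T : measurableType d) (M : 'M[R]_n) (x0 : T -> 'cV[R]_n) :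
  (forall i, measurable_fun [set: T] (fun w => x0 w i 0)) ->
  measurable_fun [set: T] (fun w => qf M (x0 w)).
Proof.
move=> mx; rewrite (_ : (fun w => qf M (x0 w)) =
   (fun w => \sum_(j <- index_enum 'I_n) (\sum_(i <- index_enum 'I_n) x0 w i 0 * M i j) * x0 w j 0)); last first.
  by apply: funext => w; rewrite /qf bilE.
apply: measurable_sum => j; apply: measurable_funM => //.
by apply: measurable_sum => i; apply: measurable_funM => //.
Qed.

Lemma qf1_alt (y : 'cV[R]_n) : (y^T *m y) 0 0 = qf 1%:M y.
Proof. by rewrite /qf /bil mulmx1. Qed.

Lemma mEFin d (T : measurableType d) (g : T -> R) :
  measurable_fun [set: T] g -> measurable_fun [set: T] (fun w => (g w)%:E).
Proof. by move=> mg; apply/measurable_EFinP. Qed.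

Lemma ms_from_bound (q C rho : R) : 0 <= q <= 1 -> 0 <= C -> 0 <= rho -> rho < 1 ->
  (forall t x, Wsum A B K q (qf 1%:M) t x <= C * rho ^+ t * qf 1%:M x) ->
  ms_stabilizes A B K q.
Proof.
move=> hq C0 r0 r1 HW d T P x0 mx ix.
set E := (\int[P]_w (qf 1%:M (x0 w))%:E)%E.
have E0 : (0 <= E)%E by apply: integral_ge0 => w _; rewrite lee_fin qf1_ge0.
have Efin : E \is a fin_num.
  rewrite ge0_fin_numE // /E.
  rewrite (_ : (fun w => (qf 1%:M (x0 w))%:E) = (fun w => \sum_(i <- index_enum 'I_n) ((x0 w i 0) ^+ 2)%:E)); last first.
    by apply: funext => w; rewrite sumEFin qf1E.
  rewrite ge0_integral_sum //; last by move=> i w _; rewrite lee_fin sqr_ge0.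
    apply: lte_sum_pinfty => i _.
    have /integrableP [_] := ix i.
    move=> h; apply: le_lt_trans h; rewrite le_eqVlt; apply/orP; left; apply/eqP.
    by apply: eq_integral => w _; rewrite gee0_abs // lee_fin sqr_ge0.
  move=> i; apply: mEFin; exact: measurable_funX.
have Ifin : forall M : 'M[R]_n, (forall x, 0 <= qf M x) ->
    (\int[P]_w (qf M (x0 w))%:E)%E \is a fin_num.
  move=> M M0; have [dM [dM0 HdM]] := qf_ub M.
  rewrite ge0_fin_numE; last by apply: integral_ge0 => w _; rewrite lee_fin.
  apply: (le_lt_trans (y := (dM%:E * E)%E)); last first.
    by rewrite -(fineK Efin) -EFinM ltry.
  rewrite -ge0_integralZl //; last by move=> w _; rewrite lee_fin qf1_ge0.
  apply: ge0_le_integral => //.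
  - by move=> w _; rewrite lee_fin.
  - by apply: mEFin; exact: meas_qf.
  - rewrite (_ : (fun x => _) = (fun w => (dM * qf 1%:M (x0 w))%:E)); last by apply: funext => w; rewrite EFinM.
    apply: mEFin; apply: measurable_funM; [exact: measurable_cst | exact: meas_qf].
  - by move=> w _; rewrite -EFinM lee_fin.
  by apply: mEFin; exact: meas_qf.
have Hen : forall t, (ms_energy A B K q P x0 t)%:E = (\int[P]_w (Wsum A B K q (qf 1%:M) t (x0 w))%:E)%E.
  move=> t; rewrite /ms_energy /Wsum -sumEFin.
  under [RHS]eq_integral => w _ do rewrite -sumEFin.
  rewrite ge0_integral_sum //; last first.
    by move=> s w _; rewrite lee_fin mulr_ge0 ?bern_prob_ge0 ?qf1_ge0.
    move=> s; apply: mEFin; apply: measurable_funM; first exact: measurable_cst.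
    rewrite (_ : (fun x => _) = (fun w => qf ((clmat (ext_path s) t)^T *m 1%:M *m clmat (ext_path s) t) (x0 w))).
      exact: meas_qf.
    by apply: funext => w; rewrite cl_stateE /qf bil_mul.
  apply: eq_bigr => s _.
  rewrite (EFinM (bern_prob q s)) (_ : (\int[P]_w (bern_prob q s * _)%:E)%E = (bern_prob q s)%:E * \int[P]_w (qf 1%:M (cl_state A B K (ext_path s) (x0 w) t))%:E)%E; last first.
    under eq_integral => w _ do rewrite EFinM.
    rewrite ge0_integralZl //; last by rewrite lee_fin bern_prob_ge0.
    - rewrite (_ : (fun x => _) = (fun w => (qf ((clmat (ext_path s) t)^T *m 1%:M *m clmat (ext_path s) t) (x0 w))%:E)).
        by apply: mEFin; apply: meas_qf.
      by apply: funext => w; rewrite cl_stateE /qf bil_mul.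
    - by move=> w _; rewrite lee_fin qf1_ge0.
  congr (_ * _)%E.
  under eq_integral => w _ do rewrite qf1_alt.
  rewrite fineK //.
  under eq_integral => w _ do rewrite cl_stateE /qf -bil_mul.
  apply: (Ifin ((clmat (ext_path s) t)^T *m 1%:M *m clmat (ext_path s) t)) => x.
  rewrite /qf bil_mul; exact: qf1_ge0.
have Hle : forall t, 0 <= ms_energy A B K q P x0 t <= geometric (C * fine E) rho t.
  move=> t; apply/andP; split.
    rewrite /ms_energy sumr_ge0 // => s _; rewrite mulr_ge0 ?bern_prob_ge0 //.
    by apply: fine_ge0; apply: integral_ge0 => w _; rewrite lee_fin qf1_alt qf1_ge0.
  rewrite -lee_fin Hen /geometric /= -[X in (_ <= (C * fine X * _)%:E)%E]/E.
  rewrite mulrAC EFinM (fineK Efin) EFinM.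
  rewrite -ge0_integralZl //; last by rewrite lee_fin mulr_ge0 ?exprn_ge0.
  - apply: ge0_le_integral => //.
    + by move=> w _; rewrite lee_fin /Wsum sumr_ge0 // => s _; rewrite mulr_ge0 ?bern_prob_ge0 ?qf1_ge0.
    + apply: mEFin; rewrite /Wsum.
      apply: measurable_sum => s; apply: measurable_funM; first exact: measurable_cst.
      rewrite (_ : (fun x => _) = (fun w => qf ((clmat (ext_path s) t)^T *m 1%:M *m clmat (ext_path s) t) (x0 w))).
        exact: meas_qf.
      by apply: funext => w; rewrite cl_stateE /qf bil_mul.
    + rewrite (_ : (fun x => _) = (fun w => (C * rho ^+ t * qf 1%:M (x0 w))%:E)); last by apply: funext => w; rewrite !EFinM.
      apply: mEFin; apply: measurable_funM; [exact: measurable_cst | exact: meas_qf].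
    + by move=> w _; rewrite -!EFinM lee_fin HW.
  - by apply: mEFin; exact: meas_qf.
  - by move=> w _; rewrite lee_fin qf1_ge0.
apply: (@squeeze_cvgr _ _ _ _ (fun=> 0) (geometric (C * fine E) rho)).
- by apply: nearW => t; apply: Hle.
- exact: (@cvg_cst R^o).
- by apply: cvg_geometric; rewrite ger0_norm.
Qed.

End PD.
Section PE1.
Variable R : realType.

Lemma is_derive_ext (f g : R -> R) (x df : R) : f = g -> is_derive x 1 f df -> is_derive x 1 g df.
Proof. by move=> ->. Qed.

Lemma is_derive_trans (f g : R -> R) (x df dg : R) :
  is_derive x 1 f df -> f = g -> df = dg -> is_derive x 1 g dg.
Proof. by move=> H <- <-. Qed.

Lemma mono_derive (f df : R -> R) :
  (forall x : R, is_derive x 1 f (df x)) -> (forall x, 0 <= x -> 0 <= df x) ->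
  forall x, 0 <= x -> f 0 <= f x.
Proof.
move=> Hd Hpos x x0.
apply: (ger0_derive1_ndecr (a := 0) (b := x)) => //.
- move=> y; rewrite in_itv /= => /andP [y0 _].
  by rewrite derive1E (@derive_val _ _ _ _ _ _ _ (Hd y)) Hpos // ltW.
- apply: continuous_subspaceT => y.
  apply: differentiable_continuous; apply/derivable1_diffP; by case: (Hd y).
Qed.

Variable q : R.
Hypothesis q01 : 0 <= q <= 1.

Let v (t : R) := (1 - q) * expR t + q.

Lemma v_gt0 t : 0 < v t.
Proof.
case/andP: q01 => q0 q1; rewrite /v.
have [->|qn1] := eqVneq q 1; first by rewrite subrr mul0r add0r.
have : 0 < 1 - q by rewrite subr_gt0 lt_neqAle qn1.
by move=> h; rewrite ltr_pwDl // mulr_gt0 // expR_gt0.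
Qed.

Lemma dv (t : R) : is_derive t 1 v ((1 - q) * expR t).
Proof.
have H := is_deriveD (is_deriveZ (1 - q) (is_derive_expR t)) (@is_derive_cst _ R R q t 1).
apply: (is_derive_trans H); first by apply: funext => y.
by rewrite addr0.
Qed.

Let h1 (t : R) := t / 4 - q + q / v t.

Lemma dh1 (t : R) : is_derive t 1 h1 (4^-1 - q * (1 - q) * expR t / (v t ^+ 2)).
Proof.
have Hv : v t != 0 by rewrite gt_eqF // v_gt0.
have H1 := is_deriveV Hv (dv t).
have H2 := is_deriveD (is_deriveD (is_deriveZ 4^-1 (@is_derive_id _ R t 1)) (@is_derive_cst _ R R (- q) t 1))
              (is_deriveZ q H1).
apply: (is_derive_trans H2).
  by apply: funext => y; rewrite /h1 /= mulrC.
rewrite /= addr0 /GRing.scale /=.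
field.
by rewrite Hv.
Qed.

Let h (t : R) := t ^+ 2 / 8 + (1 - q) * t - ln (v t).

Lemma dh (t : R) : is_derive t 1 h (h1 t).
Proof.
have Hv : 0 < v t by apply: v_gt0.
have Hl := is_derive1_comp (is_derive1_ln Hv) (dv t).
have H2 := is_deriveD (is_deriveD (is_deriveZ 8^-1 (is_deriveX 2 (@is_derive_id _ R t 1)))
              (is_deriveZ (1 - q) (@is_derive_id _ R t 1))) (is_deriveN Hl).
apply: (is_derive_trans H2).
  by apply: funext => y; rewrite /h /= mulrC.
rewrite /h1 /GRing.scale /= !mulr1 expr1.
have -> : (1 - q) * expR t = v t - q by rewrite /v addrK.
field; rewrite gt_eqF //.
Qed.

Lemma hoeffding_lemma t : 0 <= t -> 1 - q + q * expR (- t) <= expR (t ^+ 2 / 8 - q * t).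
Proof.
move=> t0; case/andP: q01 => q0 q1.
have v0 : v 0 = 1 by rewrite /v expR0 mulr1 subrK.
have h10 : h1 0 = 0 by rewrite /h1 v0 divr1; ring.
have h0 : h 0 = 0 by rewrite /h v0 ln1; ring.
have h1pos : forall x, 0 <= x -> 0 <= h1 x.
  move=> x x0; rewrite -h10; apply: (mono_derive dh1) => // y _.
  rewrite subr_ge0.
  have vy := v_gt0 y.
  rewrite ler_pdivrMr ?exprn_gt0 //.
  have : 0 <= ((1 - q) * expR y - q) ^+ 2 by apply: sqr_ge0.
  rewrite /v; move: (expR y) => e; nra.
have hp : 0 <= h t by rewrite -h0; apply: (mono_derive dh).
have vt := v_gt0 t.
have : ln (v t) <= t ^+ 2 / 8 + (1 - q) * t.
  by move: hp; rewrite /h subr_ge0.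
rewrite -ler_expR lnK; last by rewrite posrE.
move=> hv.
have -> : 1 - q + q * expR (- t) = expR (- t) * v t.
  have E : expR (- t) * expR t = 1 by rewrite -expRD addNr expR0.
  rewrite /v; move: E; move: (expR t) (expR (- t)) => a b E.
  have -> : b * ((1 - q) * a + q) = (1 - q) * (b * a) + q * b by ring.
  by rewrite E mulr1.
have -> : t ^+ 2 / 8 - q * t = - t + (t ^+ 2 / 8 + (1 - q) * t) by ring.
by rewrite expRD ler_wpM2l // ltW // expR_gt0.
Qed.

End PE1.
Section PE2.
Variable R : realType.

Lemma tail_bound (q : R) N (t : R) : 0 <= q <= 1 -> (0 < N)%N -> 0 <= t ->
  \sum_(s : {ffun 'I_N -> bool} | qhat R s <= q - t) bern_prob q s
    <= expR (- (2 * N%:R * t ^+ 2)).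
Proof.
move=> hq N0 t0; have [q0 q1] := andP hq.
set th := 4 * t.
have th0 : 0 <= th by rewrite mulr_ge0.
set Z := fun s : {ffun 'I_N -> bool} => \sum_(i < N) (~~ s i)%:R : R.
have N0' : 0 < N%:R :> R by rewrite ltr0n.
have step1 : \sum_(s : {ffun 'I_N -> bool} | qhat R s <= q - t) bern_prob q s <=
    \sum_(s : {ffun 'I_N -> bool}) bern_prob q s * expR (th * (N%:R * (q - t) - Z s)).
  rewrite big_mkcond /=; apply: ler_sum => s _.
  case: ifP => hs; last by rewrite mulr_ge0 ?bern_prob_ge0 // ltW // expR_gt0.
  rewrite -[X in X <= _]mulr1 ler_wpM2l ?bern_prob_ge0 //.
  apply: le_trans (expR_ge1Dx _); rewrite lerDl mulr_ge0 // subr_ge0.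
  by move: hs; rewrite /qhat -/(Z s) ler_pdivrMr // mulrC.
apply: (le_trans step1).
have step2 : \sum_(s : {ffun 'I_N -> bool}) bern_prob q s * expR (th * (N%:R * (q - t) - Z s)) =
   expR (th * (N%:R * (q - t))) *
   \prod_(i < N) (\sum_(b : bool) (if b then 1 - q else q) * expR (- th * (~~ b)%:R)).
  rewrite (bigA_distr_bigA (fun (i : 'I_N) (b : bool) => (if b then 1 - q else q) * expR (- th * (~~ b)%:R))) /=.
  rewrite mulr_sumr; apply: eq_bigr => s _.
  rewrite big_split /= mulrCA; congr (_ * _).
  rewrite -(big_morph _ (@expRD R) (@expR0 R)) -expRD; congr expR.
  rewrite mulrBr; congr (_ + _); rewrite /Z mulr_sumr -sumrN.
  by apply: eq_bigr => i _; rewrite mulNr.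
rewrite step2.
have hc : \sum_(b : bool) (if b then 1 - q else q) * expR (- th * (~~ b)%:R) =
   1 - q + q * expR (- th).
  by rewrite big_bool /= mulr0 expR0 mulr1 mulr1.
under eq_bigr => i _ do rewrite hc.
rewrite prodr_const card_ord.
have hl := hoeffding_lemma hq th0.
have c0 : 0 <= 1 - q + q * expR (- th).
  by rewrite addr_ge0 ?subr_ge0 // mulr_ge0 // ltW // expR_gt0.
apply: (le_trans (y := expR (th * (N%:R * (q - t))) * expR (th ^+ 2 / 8 - q * th) ^+ N)).
  apply: ler_wpM2l; first by rewrite ltW // expR_gt0.
  by apply: lerXn2r => //; rewrite nnegrE ltW // expR_gt0.
rewrite -expRM_natl -expRD /th le_eqVlt; apply/orP; left; apply/eqP; congr expR; by field.
Qed.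

End PE2.
Section PF.
Variable R : realType.

Lemma stab_bound (n m : nat) (A : 'M[R]_n) (B : 'M[R]_(n, m)) (K : 'M[R]_(m, n))
  (P M : 'M[R]_n) (q : R) : 0 <= q <= 1 -> posdef P -> posdef M ->
  (forall x, q * qf P (Fb A B K false *m x) + (1 - q) * qf P (Fb A B K true *m x)
      <= qf P x - qf M x) ->
  exists C rho, [/\ 0 <= C, 0 <= rho, rho < 1 &
    forall t x, Wsum A B K q (qf 1%:M) t x <= C * rho ^+ t * qf 1%:M x].
Proof.
move=> hq pP pM Hs.
have [c [c0 Hc]] := posdef_lb pM.
have [d [d0 Hd]] := qf_ub P.
have [cP [cP0 HcP]] := posdef_lb pP.
set k := c * (d + 1).
have k0 : 0 < k by rewrite mulr_gt0 // ltr_wpDl.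
set rho := 1 - (k + 1)^-1.
have k1 : 0 < k + 1 by rewrite ltr_wpDl // ltW.
have rho0 : 0 <= rho.
  by rewrite subr_ge0 invf_le1 // lerDr ltW.
have rho1 : rho < 1 by rewrite ltrBlDr ltrDl invr_gt0.
have fP : forall x, 0 <= qf P x by move=> x; apply: posdef_ge0.
have step : forall x, q * qf P (Fb A B K false *m x) + (1 - q) * qf P (Fb A B K true *m x)
     <= rho * qf P x.
  move=> x; apply: (le_trans (Hs x)).
  have h1 : qf P x <= k * qf M x.
    apply: (le_trans (Hd x)).
    have := Hc x; have := qf1_ge0 x; have := fP x.
    have := posdef_ge0 x pM.
    rewrite /k => hm _ h1 hc.
    apply: (le_trans (y := (d + 1) * qf 1%:M x)).
      by rewrite ler_wpM2r // lerDl.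
    apply: (le_trans (y := (d + 1) * (c * qf M x))).
      by apply: ler_wpM2l => //; rewrite addr_ge0.
    by rewrite mulrA [(d + 1) * c]mulrC.
  have h2 : qf P x / (k + 1) <= qf M x.
    rewrite ler_pdivrMr //; apply: (le_trans h1).
    rewrite [X in _ <= X]mulrC; apply: ler_wpM2r; [exact: posdef_ge0 | by rewrite lerDl].
  rewrite /rho mulrBl mul1r mulrC; lra.
have HW := Wsum_bound hq rho0 fP step.
exists (cP * (d + 1)), rho; split => //; first by apply: mulr_ge0; [exact: ltW | exact: addr_ge0].
move=> t x.
apply: (le_trans (Wsum_le A B K t x hq HcP)).
apply: (le_trans (y := cP * (rho ^+ t * qf P x))).
  by rewrite ler_wpM2l // ltW.
rewrite -!mulrA; apply: ler_wpM2l; first exact: ltW.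
rewrite mulrCA; apply: ler_wpM2l; first exact: exprn_ge0.
apply: (le_trans (Hd x)); apply: ler_wpM2r; [exact: qf1_ge0 | by rewrite lerDl].
Qed.

End PF.
Lemma prob_lb (R : realType) (q : R) N (E : {ffun 'I_N -> bool} -> Prop) (a b : R) :
  0 <= q <= 1 -> (forall s, a < qhat R s -> E s) ->
  \sum_(s : {ffun 'I_N -> bool} | qhat R s <= a) bern_prob q s <= b ->
  1 - b <= sample_prob q E.
Proof.
move=> hq HE Hb; rewrite /sample_prob.
have tot := bern_sum1 q N.
rewrite (bigID (fun s => `[< E s >])) /= in tot.
have : \sum_(s : {ffun 'I_N -> bool} | ~~ `[< E s >]) bern_prob q s <= b.
  apply: le_trans Hb; rewrite [X in _ <= X]big_mkcond [X in X <= _]big_mkcond /=.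
  apply: ler_sum => s _.
  case: (asboolP (E s)) => hE /=; first by case: ifP => // _; apply: bern_prob_ge0.
  have -> : qhat R s <= a by rewrite leNgt; apply/negP => /HE.
  by [].
move: tot; set X := \sum_(s | `[< E s >]) _; set Y := \sum_(s | ~~ `[< E s >]) _.
lra.
Qed.

Theorem theorem7 (R : realType) (n m : nat) (A : 'M[R]_n) (B : 'M[R]_(n, m))
  (Q : 'M[R]_n) (Rw : 'M[R]_m) (q qc beta : R) (N : nat) :
  stabilizable A B -> posdef Q -> posdef Rw ->
  0 < q < 1 ->
  (forall p : R, 0 <= p < qc ->
     exists! X : 'M[R]_n, posdef X /\ riccati A B Q Rw p X) ->
  q < qc ->
  0 < beta < 1 ->
  (0 < N)%N ->
  sample_prob q (fun s : {ffun 'I_N -> bool} =>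
    qhat R s < qc ->
    forall Ph : 'M[R]_n, posdef Ph -> riccati A B Q Rw (qhat R s) Ph ->
      qhat R s + Delta N beta <= qbar A B Q Rw (qhat R s) Ph ->
      ms_stabilizes A B (gain A B Rw Ph) q)
  >= 1 - beta.
Proof.
move=> _ pQ pRw /andP[q0 q1] _ hqc /andP[b0 b1] N0.
have hq : 0 <= q <= 1 by rewrite !ltW.
set Dl := Delta N beta.
have N0' : 0 < N%:R :> R by rewrite ltr0n.
have lnb : 0 <= ln (2 / beta).
  apply: ln_ge0; rewrite ler_pdivlMr // mul1r; apply: (le_trans (ltW b1)); lra.
have Dl0 : 0 <= Dl by apply: sqrtr_ge0.
have Dl2 : 2 * N%:R * Dl ^+ 2 = ln (2 / beta).
  rewrite /Dl /Delta sqr_sqrtr; last by rewrite divr_ge0 // mulr_ge0 // ltW.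
  by field; rewrite gt_eqF.
apply: (prob_lb (a := q - Dl)) => //; last first.
  apply: (le_trans (tail_bound hq N0 Dl0)).
  rewrite Dl2 expRN lnK; last by rewrite posrE divr_gt0.
  rewrite invf_div ler_pdivrMr //; lra.
move=> s hs _ Ph pPh ric hbar.
move: hbar; rewrite /qbar /=.
set qh := qhat R s in hs ric *.
set K := gain A B Rw Ph.
set G := A^T *m Ph *m B *m invmx (Rw + B^T *m Ph *m B) *m B^T *m Ph *m A.
set S := [set x : R | _]%classic => hbar.
have qS : q < sup S by apply: (lt_le_trans _ hbar); lra.
have [S0|S0] := pselect (S !=set0)%classic; last first.
  have : S = set0%classic by apply/seteqP; split => x // Sx; exfalso; apply: S0; exists x.
  by move=> hS; move: qS; rewrite hS sup0; lra.
have hsup : has_sup S.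
  by split => //; exists 1 => y [/andP [_ y1] _].
have [e Se he] := sup_adherent (eps := sup S - q) (ltac:(by rewrite subr_gt0)) hsup.
have qe : q < e by move: he; rewrite opprB addrCA subrr addr0.
case: Se => /andP[e0 e1] [qhe]; set Me := (X in posdef X -> _) => pMe.
suff Hs : forall x, q * qf Ph (Fb A B K false *m x) + (1 - q) * qf Ph (Fb A B K true *m x)
    <= qf Ph x - qf Me x.
  have [C [rho [C0 r0 r1 HW]]] := stab_bound hq pPh pMe Hs.
  exact: (ms_from_bound hq C0 r0 r1 HW).
move=> x; rewrite /Me; rewrite (one_step pRw pPh ric q x) -/K -/G.
rewrite lerD2l lerN2.
have g0 : 0 <= qf G x.
  rewrite /G (g_eq A B pRw pPh x); apply: posdef_ge0; exact: W_posdef.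
have r0 : 0 <= qf Rw (K *m x) by apply: posdef_ge0.
rewrite /qf !bilMD !bilMN !bilMZ bil_mul -!/(qf _ _).
have : 0 <= (e - q) * (qf Rw (K *m x) + qf G x) by rewrite mulr_ge0 // ?subr_ge0 ?addr_ge0 // ltW.
move: (qf Rw (K *m x)) (qf G x) (qf Q x) r0 g0 => r g u r0 g0.
nra.
Qed.
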